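(* Consider the RIS-assisted localization model described in the context, with fixed known AoDs $(\theta_i,\phi_i)$, propagation gains $h_i\in\mathbb{C}$, RIS phase shifts $\varrho_i\in[0,2\pi]$, pilot vectors $\boldsymbol{x}(1),\dots,\boldsymbol{x}(L)\in\mathbb{C}^{N_{\mathrm{t}}}$ and noise variance $\sigma^2>0$, and let $\mathbf{J}_{\boldsymbol{q}}=\mathbf{T}\mathbf{J}_{\boldsymbol{\eta}}\mathbf{T}^{\mathrm{T}}\in\mathbb{R}^{2\times 2}$ be the Fisher information matrix of the MS position $\boldsymbol{q}_{1:2}=[q_x,q_y]^{\mathrm{T}}$ (assumed nonsingular). Then for $a,b\in\{1,2\}$, $$[\mathbf{J}_{\boldsymbol{q}}]_{a,b}=\sum_{l=1}^{L}\frac{2}{\sigma^2}\sum_{m=1}^{N}\sum_{n=1}^{N}\mathfrak{Re}\Big[e^{j(\varrho_n-\varrho_m)}\kappa^{a,b}_{m,n}(l)\Big],$$ where, writing $u^1=x$, $u^2=y$, $$\kappa^{a,b}_{m,n}(l)=\alpha_m^{u^a}\alpha_n^{u^b}\dot{\boldsymbol{\varpi}}_m^{\mathrm{H}}(l)\dot{\boldsymbol{\varpi}}_n(l)+\beta_m^{u^a}\alpha_n^{u^b}\ddot{\boldsymbol{\varpi}}_m^{\mathrm{H}}(l)\dot{\boldsymbol{\varpi}}_n(l)+\alpha_m^{u^a}\beta_n^{u^b}\dot{\boldsymbol{\varpi}}_m^{\mathrm{H}}(l)\ddot{\boldsymbol{\varpi}}_n(l)+\beta_m^{u^a}\beta_n^{u^b}\ddot{\boldsymbol{\varpi}}_m^{\mathrm{H}}(l)\ddot{\boldsymbol{\varpi}}_n(l),$$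 and consequently the Cramér–Rao lower bound for the estimate of the absolute MS position is $$\mathrm{CRLB}=\mathrm{Tr}\big(\mathbf{J}_{\boldsymbol{q}}^{-1}\big)=\frac{[\mathbf{J}_{\boldsymbol{q}}]_{1,1}+[\mathbf{J}_{\boldsymbol{q}}]_{2,2}}{[\mathbf{J}_{\boldsymbol{q}}]_{1,1}[\mathbf{J}_{\boldsymbol{q}}]_{2,2}-[\mathbf{J}_{\boldsymbol{q}}]_{1,2}[\mathbf{J}_{\boldsymbol{q}}]_{2,1}}.$$
   Context: Setting: a base station (BS) with $N_{\mathrm{t}}$ antennas at known position $\boldsymbol{p}=[p_x,p_y,0]^{\mathrm{T}}$, a mobile station (MS) with $N_{\mathrm{r}}$ antennas at unknown position $\boldsymbol{q}=[q_x,q_y,0]^{\mathrm{T}}$, and a reconfigurable intelligent surface (RIS) with $N$ reflecting elements at known positions $\boldsymbol{s}^i=[s^i_x,s^i_y,s^i_z]^{\mathrm{T}}$, $s^i_z>0$, $i=1,\dots,N$; the line of sight is blocked, so there are exactly $N$ paths, path $i$ going through element $i$. Path $i$ has known elevation/azimuth angle-of-departure $\theta_i,\phi_i$ and elevation/azimuth angle-of-arrival $\vartheta_i,\varphi_i$, which are functions of $\boldsymbol{q}_{1:2}$ given by $\vartheta_i=\arctan\big(\|\boldsymbol{q}_{1:2}-\boldsymbol{s}^i_{1:2}\|_2/s^i_z\big)$ and $\varphi_i=\arccos\big(-|q_x-s^i_x|/\|\boldsymbol{q}_{1:2}-\boldsymbol{s}^i_{1:2}\|_2\big)$ (assumed differentiable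 at the true $\boldsymbol{q}_{1:2}$). Let $k=2\pi d/\lambda$ ($d$ antenna spacing, $\lambda$ wavelength), $\xi_i=k\sin\vartheta_i\sin\varphi_i$, $\zeta_i=k\sin\theta_i\sin\phi_i$, $\mathbf{a}_{\mathrm{t}}(\theta_i,\phi_i)=[e^{j(n-1)\zeta_i}]_{n=1}^{N_{\mathrm{t}}}$, $\mathbf{a}_{\mathrm{r}}(\vartheta_i,\varphi_i)=[e^{j(m-1)\xi_i}]_{m=1}^{N_{\mathrm{r}}}$, $\mathbf{\Lambda}_{\mathrm{t}}=[\mathbf{a}_{\mathrm{t}}(\theta_1,\phi_1),\dots,\mathbf{a}_{\mathrm{t}}(\theta_N,\phi_N)]$, $\mathbf{\Lambda}_{\mathrm{r}}=[\mathbf{a}_{\mathrm{r}}(\vartheta_1,\varphi_1),\dots,\mathbf{a}_{\mathrm{r}}(\vartheta_N,\varphi_N)]$. The channel is $\tilde{\mathbf{H}}=\mathbf{\Lambda}_{\mathrm{r}}\,\mathrm{diag}(h_1,\dots,h_N)\,\mathrm{diag}(e^{j\varrho_1},\dots,e^{j\varrho_N})\,\mathbf{\Lambda}_{\mathrm{t}}^{\mathrm{H}}$. In time slot $l=1,\dots,L$ the MS receives $\boldsymbol{y}(l)=\tilde{\mathbf{H}}\boldsymbol{x}(l)+\boldsymbol{n}$ with noise entries i.i.d. $\mathcal{CN}(0,\sigma^2)$; write $\boldsymbol{\mu}(l)=\tilde{\mathbf{H}}\boldsymbol{x}(l)$. The unknown parameter vector is $\boldsymbol{\eta}=[\vartheta_1,\dots,\vartheta_N,\varphi_1,\dots,\varphi_N,h_1,\dots,h_N]^{\mathrm{T}}$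 and its Fisher information matrix is $[\mathbf{J}_{\boldsymbol{\eta}}]_{m,n}=\sum_{l=1}^{L}\frac{2}{\sigma^2}\mathfrak{Re}\big\{\frac{\partial\boldsymbol{\mu}^{\mathrm{H}}(l)}{\partial\eta_m}\frac{\partial\boldsymbol{\mu}(l)}{\partial\eta_n}\big\}$. The transformation matrix is $\mathbf{T}=\partial\boldsymbol{\eta}^{\mathrm{T}}/\partial\boldsymbol{q}_{1:2}\in\mathbb{R}^{2\times 3N}$, where the gains $h_i$ do not depend on $\boldsymbol{q}$ (so $\partial h_i/\partial\boldsymbol{q}_{1:2}=0$). Notation: $\alpha_i^x=\partial\vartheta_i/\partial q_x$, $\alpha_i^y=\partial\vartheta_i/\partial q_y$, $\beta_i^x=\partial\varphi_i/\partial q_x$, $\beta_i^y=\partial\varphi_i/\partial q_y$. Define $N_{\mathrm{r}}\times N_{\mathrm{t}}$ matrices $[\dot{\boldsymbol{\Xi}}_i]_{m,n}=h_i\,j(m-1)k\sin\varphi_i\cos\vartheta_i\,e^{j[(m-1)\xi_i+(1-n)\zeta_i]}$ and $[\ddot{\boldsymbol{\Xi}}_i]_{m,n}=h_i\,j(m-1)k\sin\vartheta_i\cos\varphi_i\,e^{j[(m-1)\xi_i+(1-n)\zeta_i]}$, and vectors $\dot{\boldsymbol{\varpi}}_i(l)=\dot{\boldsymbol{\Xi}}_i\boldsymbol{x}(l)$, $\ddot{\boldsymbol{\varpi}}_i(l)=\ddot{\boldsymbol{\Xi}}_i\boldsymbol{x}(l)$. The CRLB for the MS position estimate is defined as $\mathrm{Tr}(\mathbf{J}_{\boldsymbol{q}}^{-1})$.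 *)

(* Defs.v *)
(* All indices are 0-based: path i ranges over 0..N-1, receive antenna m over
   0..Nr-1, transmit antenna n over 0..Nt-1, time slot l over 0..L-1;
   the paper's (m-1), (n-1), l=1..L become m, n, l=0..L-1. *)
From Stdlib Require Import Reals.
From Coquelicot Require Import Coquelicot.
From mathcomp Require Import all_boot all_algebra.
From mathcomp Require Import Rstruct.

Open Scope R_scope.

Fixpoint csum (n : nat) (f : nat -> C) : C :=
  match n with O => RtoC 0 | S n' => Cplus (csum n' f) (f n') end.
Fixpoint rsum (n : nat) (f : nat -> R) : R :=
  match n with O => 0 | S n' => rsum n' f + f n' end.

Definition cis (t : R) : C := (cos t, sin t).
Definition jC : C := (0, 1).

Definition kwave (d lam : R) : R := 2 * PI * d / lam.

Definition dist2 (sx sy : R) (qx qy : R) : R :=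
  sqrt ((qx - sx) ^ 2 + (qy - sy) ^ 2).
Definition vartheta_q (sx sy sz : R) (qx qy : R) : R :=
  atan (dist2 sx sy qx qy / sz).
Definition varphi_q (sx sy : R) (qx qy : R) : R :=
  acos (- Rabs (qx - sx) / dist2 sx sy qx qy).

Definition upd {A : Type} (f : nat -> A) (p : nat) (v : A) : nat -> A :=
  fun i => if Nat.eqb i p then v else f i.

(* noiseless received signal  mu(l) = H~ x(l), m-th entry, as a function of
   the AoAs vth, vph, and gains h (AoDs th, ph, phases rho, pilots x fixed):
   mu_m = sum_i e^{j m xi_i} h_i e^{j rho_i} sum_n conj(e^{j n zeta_i}) x_n *)
Definition mu (k : R) (N Nt : nat) (th ph rho : nat -> R) (x : nat -> nat -> C)
  (vth vph : nat -> R) (h : nat -> C) (l m : nat) : C :=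
  csum N (fun i =>
    Cmult (Cmult (Cmult (cis (INR m * (k * sin (vth i) * sin (vph i)))) (h i))
                 (cis (rho i)))
          (csum Nt (fun n =>
             Cmult (Cconj (cis (INR n * (k * sin (th i) * sin (ph i))))) (x l n)))).

(* D l p m is the derivative of the m-th entry of mu(l) w.r.t. eta_p, where
   eta = [vth_0..vth_{N-1}, vph_0..vph_{N-1}, h_0..h_{N-1}], evaluated at the
   true parameters (vth, vph, h). *)
Definition is_mu_derivative (k : R) (N Nt Nr L : nat) (th ph rho : nat -> R)
  (x : nat -> nat -> C) (vth vph : nat -> R) (h : nat -> C)
  (D : nat -> nat -> nat -> C) : Prop :=
  forall l m, (l < L)%nat -> (m < Nr)%nat ->
    (forall p, (p < N)%nat ->
       @is_derive R_AbsRing C_R_NormedModule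
         (fun t => mu k N Nt th ph rho x (upd vth p t) vph h l m) (vth p) (D l p m)) /\
    (forall p, (p < N)%nat ->
       @is_derive R_AbsRing C_R_NormedModule
         (fun t => mu k N Nt th ph rho x vth (upd vph p t) h l m) (vph p)
         (D l (N + p)%nat m)) /\
    (forall p, (p < N)%nat ->
       @is_derive C_AbsRing C_NormedModule
         (fun z => mu k N Nt th ph rho x vth vph (upd h p z) l m) (h p)
         (D l (2 * N + p)%nat m)).

Definition J_eta (Nr L : nat) (sigma2 : R) (D : nat -> nat -> nat -> C)
  (p p' : nat) : R :=
  rsum L (fun l => 2 / sigma2 *
    Re (csum Nr (fun m => Cmult (Cconj (D l p m)) (D l p' m)))).

(* transformation matrix T = d eta^T / d q_{1:2}  (2 x 3N), row a = 0 for q_x,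
   a = 1 for q_y; al a i = d vartheta_i / d u^a, be a i = d varphi_i / d u^a;
   the gain columns are zero. *)
Definition Tmat (N : nat) (al be : nat -> nat -> R) (a p : nat) : R :=
  if (p <? N)%nat then al a p
  else if (p <? 2 * N)%nat then be a (p - N)%nat
  else 0.

Definition J_q_entry (N Nr L : nat) (sigma2 : R) (D : nat -> nat -> nat -> C)
  (al be : nat -> nat -> R) (a b : nat) : R :=
  rsum (3 * N) (fun p => rsum (3 * N) (fun p' =>
    Tmat N al be a p * J_eta Nr L sigma2 D p p' * Tmat N al be b p')).

Definition J_q (N Nr L : nat) (sigma2 : R) (D : nat -> nat -> nat -> C)
  (al be : nat -> nat -> R) : 'M[R]_2 :=
  \matrix_(a < 2, b < 2) J_q_entry N Nr L sigma2 D al be a b.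

(* [dotXi_i]_{m,n} and [ddotXi_i]_{m,n}, with (m-1) -> m, (1-n) -> -n *)
Definition dXi (k : R) (th ph vth vph : nat -> R) (h : nat -> C) (i m n : nat) : C :=
  Cmult (Cmult (h i) (Cmult jC (RtoC (INR m * k * sin (vph i) * cos (vth i)))))
        (cis (INR m * (k * sin (vth i) * sin (vph i))
              - INR n * (k * sin (th i) * sin (ph i)))).
Definition ddXi (k : R) (th ph vth vph : nat -> R) (h : nat -> C) (i m n : nat) : C :=
  Cmult (Cmult (h i) (Cmult jC (RtoC (INR m * k * sin (vth i) * cos (vph i)))))
        (cis (INR m * (k * sin (vth i) * sin (vph i))
              - INR n * (k * sin (th i) * sin (ph i)))).

Definition matvec (Nt : nat) (A : nat -> nat -> C) (x : nat -> C) (m : nat) : C :=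
  csum Nt (fun n => Cmult (A m n) (x n)).

Definition hdot (Nr : nat) (u v : nat -> C) : C :=
  csum Nr (fun r => Cmult (Cconj (u r)) (v r)).

Definition kappa (k : R) (Nt Nr : nat) (th ph vth vph : nat -> R) (h : nat -> C)
  (x : nat -> nat -> C) (al be : nat -> nat -> R) (a b m n l : nat) : C :=
  let dw := fun i => matvec Nt (dXi k th ph vth vph h i) (x l) in
  let ddw := fun i => matvec Nt (ddXi k th ph vth vph h i) (x l) in
  Cplus (Cplus (Cplus
    (Cmult (RtoC (al a m * al b n)) (hdot Nr (dw m) (dw n)))
    (Cmult (RtoC (be a m * al b n)) (hdot Nr (ddw m) (dw n))))
    (Cmult (RtoC (al a m * be b n)) (hdot Nr (dw m) (ddw n))))
    (Cmult (RtoC (be a m * be b n)) (hdot Nr (ddw m) (ddw n))).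

(* Main.v *)
Require Import Defs.
From Stdlib Require Import Reals.
From Coquelicot Require Import Coquelicot.
From mathcomp Require Import all_boot all_algebra.
From mathcomp Require Import Rstruct.
From Stdlib Require Import Lra Lia.
From mathcomp Require Import zify.
Open Scope R_scope.

Notation isdC f x l := (@is_derive R_AbsRing C_R_NormedModule f x l).

Lemma isdC_fst (f : R -> C) x l : isdC f x l -> is_derive (fun t => fst (f t)) x (fst l).
Proof.
move=> H.
have H2 := filterdiff_comp' f (fst : C_R_NormedModule -> R_NormedModule) _ _ _ H (filterdiff_linear _ is_linear_fst).
eapply filterdiff_ext_lin; first exact H2.
move=> y /=. reflexivity.
Qed.

Lemma isdC_snd (f : R -> C) x l : isdC f x l -> is_derive (fun t => snd (f t)) x (snd l).
Proof.
move=> H.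
have H2 := filterdiff_comp' f (snd : C_R_NormedModule -> R_NormedModule) _ _ _ H (filterdiff_linear _ is_linear_snd).
eapply filterdiff_ext_lin; first exact H2.
move=> y /=. reflexivity.
Qed.

Lemma isdC_uniq (f : R -> C) x l l' : isdC f x l -> isdC f x l' -> l = l'.
Proof.
move=> H H'.
have a := is_derive_unique _ _ _ (isdC_fst _ _ _ H).
have a' := is_derive_unique _ _ _ (isdC_fst _ _ _ H').
have b := is_derive_unique _ _ _ (isdC_snd _ _ _ H).
have b' := is_derive_unique _ _ _ (isdC_snd _ _ _ H').
destruct l, l'; simpl in *; congruence.
Qed.

Lemma isdC_pair (f : R -> C) x a b : is_derive (fun t => fst (f t)) x a ->
  is_derive (fun t => snd (f t)) x b -> isdC f x (a, b).
Proof.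
move=> Ha Hb.
set P := prod_NormedModule R_AbsRing R_NormedModule R_NormedModule.
have L : filterdiff (fun t : P => (t.1, t.2) : C_R_NormedModule) (locally ((f x).1, (f x).2))
   (fun t : P => (t.1, t.2) : C_R_NormedModule).
  eapply filterdiff_ext; last first.
  eapply filterdiff_ext_lin; first exact (filterdiff_linear _ (@is_linear_id R_AbsRing P)).
  by move=> [y1 y2].
  by move=> [y1 y2].
have H := filterdiff_comp'_2 (fun t => fst (f t)) (fun t => snd (f t))
   (fun u v => (u, v) : C_R_NormedModule) _ _ _ (fun u v => (u, v) : C_R_NormedModule) Ha Hb L.
eapply filterdiff_ext; last first.
eapply filterdiff_ext_lin; first exact H.
move=> y /=. reflexivity.
move=> y /=. by destruct (f y).
Qed.

Lemma isdC_multc (f : R -> C) x l c : isdC f x l -> isdC (fun t => Cmult (f t) c) x (Cmult l c).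
Proof.
move=> H.
have H1 := isdC_fst _ _ _ H. have H2 := isdC_snd _ _ _ H.
destruct l as [l1 l2], c as [c1 c2]. simpl in H1, H2.
have S1 : forall c, is_derive (fun t => (f t).1 * c) x (l1 * c).
  move=> c; apply: (is_derive_ext (fun t => c * (f t).1)); first by move=> t; apply Rmult_comm.
  rewrite (Rmult_comm l1); exact: (is_derive_scal _ _ c _ H1).
have S2 : forall c, is_derive (fun t => (f t).2 * c) x (l2 * c).
  move=> c; apply: (is_derive_ext (fun t => c * (f t).2)); first by move=> t; apply Rmult_comm.
  rewrite (Rmult_comm l2); exact: (is_derive_scal _ _ c _ H2).
rewrite /Cmult /=.
apply: isdC_pair => /=.
- apply: (is_derive_ext (fun t => (f t).1 * c1 - (f t).2 * c2)).
    move=> t; by destruct (f t).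
  exact: is_derive_minus.
- apply: (is_derive_ext (fun t => (f t).1 * c2 + (f t).2 * c1)).
    move=> t; by destruct (f t).
  exact: is_derive_plus.
Qed.

Lemma isdC_const (c : C) x : isdC (fun _ => c) x (RtoC 0).
Proof. exact: is_derive_const. Qed.

Lemma isdC_csum n (f : nat -> R -> C) (f' : nat -> C) x :
  (forall i, (i < n)%coq_nat -> isdC (f i) x (f' i)) ->
  isdC (fun t => csum n (fun i => f i t)) x (csum n f').
Proof.
elim: n => [|n IH] H /=.
- exact: isdC_const.
- apply: (@is_derive_plus R_AbsRing C_R_NormedModule (fun t => csum n (fun i => f i t)) (f n)).
  + apply: IH => i Hi; apply: H; lia.
  + apply: H; lia.
Qed.

Lemma isdC_cis (m k v : R) x :
  isdC (fun t => cis (m * (k * sin t * sin v))) x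
    (Cmult (Cmult jC (RtoC (m * k * cos x * sin v))) (cis (m * (k * sin x * sin v)))).
Proof.
rewrite /Cmult /jC /RtoC {3}/cis /=.
apply: isdC_pair => /=.
- auto_derive => //. ring.
- auto_derive => //. ring.
Qed.

Lemma csum_ext n (f g : nat -> C) : (forall i, (i < n)%coq_nat -> f i = g i) -> csum n f = csum n g.
Proof. elim: n => [|n IH] H //=. rewrite IH; [rewrite H //; lia | move=> i Hi; apply H; lia]. Qed.

Lemma csum_mult_l n (f : nat -> C) c : csum n (fun i => Cmult c (f i)) = Cmult c (csum n f).
Proof. elim: n => [|n IH] /=. apply injective_projections; simpl; ring. rewrite IH. ring. Qed.

Lemma csum_mult_l_rev n c (f : nat -> C) : Cmult c (csum n f) = csum n (fun i => Cmult c (f i)).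
Proof. by rewrite csum_mult_l. Qed.

Lemma csum_single n p (c : C) : (p < n)%coq_nat ->
  csum n (fun i => if Nat.eqb i p then c else RtoC 0) = c.
Proof.
elim: n => [|n IH] Hp /=; first lia.
case: (Nat.eqb_spec n p) => Hn.
- subst. rewrite (csum_ext _ _ (fun _ => RtoC 0)).
  + have -> : forall k, csum k (fun _ => RtoC 0) = RtoC 0.
      elim=> [|k IHk] //=. rewrite IHk. ring.
    ring.
  + move=> i Hi. case: (Nat.eqb_spec i p) => //; lia.
- rewrite IH; [ring | lia].
Qed.

Lemma cis_minus a b : cis (a - b) = Cmult (cis a) (Cconj (cis b)).
Proof. rewrite /cis /Cconj /Cmult /=. rewrite cos_minus sin_minus. apply injective_projections; simpl; ring. Qed.

Lemma cisd_eq g r : (- sin g * r, cos g * r) = Cmult (Cmult jC (RtoC r)) (cis g).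
Proof. rewrite /cis /jC /Cmult /RtoC /=. apply injective_projections; simpl; ring. Qed.

Lemma upd_same {A} (f : nat -> A) p v : upd f p v p = v.
Proof. by rewrite /upd Nat.eqb_refl. Qed.
Lemma upd_other {A} (f : nat -> A) p v i : i <> p -> upd f p v i = f i.
Proof. move=> H; rewrite /upd. by case: (Nat.eqb_spec i p). Qed.

Lemma mu_dvth k N Nt th ph rho x vth vph h l m p : (p < N)%coq_nat ->
  isdC (fun t => mu k N Nt th ph rho x (upd vth p t) vph h l m) (vth p)
    (Cmult (cis (rho p)) (matvec Nt (dXi k th ph vth vph h p) (x l) m)).
Proof.
move=> Hp. rewrite /mu.
set S := fun i => csum Nt (fun n => Cmult (Cconj (cis (INR n * (k * sin (th i) * sin (ph i))))) (x l n)).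
set g := INR m * (k * sin (vth p) * sin (vph p)).
set r := INR m * k * cos (vth p) * sin (vph p).
have -> : Cmult (cis (rho p)) (matvec Nt (dXi k th ph vth vph h p) (x l) m)
  = Cmult (Cmult (Cmult (Cmult (Cmult jC (RtoC r)) (cis g)) (h p)) (cis (rho p))) (S p).
  rewrite /matvec /S. rewrite (csum_mult_l_rev Nt (cis (rho p))).
  rewrite (csum_mult_l_rev Nt (Cmult (Cmult (Cmult (Cmult jC (RtoC r)) (cis g)) (h p)) (cis (rho p)))).
  apply: csum_ext => n Hn. rewrite /dXi cis_minus.
  have -> : INR m * k * sin (vph p) * cos (vth p) = r by rewrite /r; ring.
  rewrite /g. ring.
match goal with |- is_derive _ _ ?V => rewrite -(csum_single N p V Hp) end.
apply: isdC_csum => i Hi.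
case: (Nat.eqb_spec i p) => Hip.
- subst i.
  apply: (is_derive_ext (fun t => Cmult (Cmult (Cmult (cis (INR m * (k * sin t * sin (vph p)))) (h p)) (cis (rho p))) (S p))).
    by move=> t; rewrite upd_same.
  apply: isdC_multc. apply: isdC_multc. apply: isdC_multc.
  exact: isdC_cis.
-
  apply: (@is_derive_ext R_AbsRing C_R_NormedModule (fun _ => Cmult (Cmult (Cmult (cis (INR m * (k * sin (vth i) * sin (vph i)))) (h i)) (cis (rho i))) (S i))).
    by move=> t; rewrite upd_other.
  exact: isdC_const.
Qed.

Lemma isdC_cis2 (m k u : R) x :
  isdC (fun t => cis (m * (k * sin u * sin t))) x
    (Cmult (Cmult jC (RtoC (m * k * sin u * cos x))) (cis (m * (k * sin u * sin x)))).
Proof.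
rewrite /Cmult /jC /RtoC {3}/cis /=.
apply: isdC_pair => /=.
- auto_derive => //. ring.
- auto_derive => //. ring.
Qed.

Lemma mu_dvph k N Nt th ph rho x vth vph h l m p : (p < N)%coq_nat ->
  isdC (fun t => mu k N Nt th ph rho x vth (upd vph p t) h l m) (vph p)
    (Cmult (cis (rho p)) (matvec Nt (ddXi k th ph vth vph h p) (x l) m)).
Proof.
move=> Hp. rewrite /mu.
set S := fun i => csum Nt (fun n => Cmult (Cconj (cis (INR n * (k * sin (th i) * sin (ph i))))) (x l n)).
set g := INR m * (k * sin (vth p) * sin (vph p)).
set r := INR m * k * sin (vth p) * cos (vph p).
have -> : Cmult (cis (rho p)) (matvec Nt (ddXi k th ph vth vph h p) (x l) m)
  = Cmult (Cmult (Cmult (Cmult (Cmult jC (RtoC r)) (cis g)) (h p)) (cis (rho p))) (S p).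
  rewrite /matvec /S. rewrite (csum_mult_l_rev Nt (cis (rho p))).
  rewrite (csum_mult_l_rev Nt (Cmult (Cmult (Cmult (Cmult jC (RtoC r)) (cis g)) (h p)) (cis (rho p)))).
  apply: csum_ext => n Hn. rewrite /ddXi cis_minus.
  rewrite /g /r. ring.
match goal with |- is_derive _ _ ?V => rewrite -(csum_single N p V Hp) end.
apply: isdC_csum => i Hi.
case: (Nat.eqb_spec i p) => Hip.
- subst i.
  apply: (is_derive_ext (fun t => Cmult (Cmult (Cmult (cis (INR m * (k * sin (vth p) * sin t))) (h p)) (cis (rho p))) (S p))).
    by move=> t; rewrite upd_same.
  apply: isdC_multc. apply: isdC_multc. apply: isdC_multc.
  exact: isdC_cis2.
- apply: (@is_derive_ext R_AbsRing C_R_NormedModule (fun _ => Cmult (Cmult (Cmult (cis (INR m * (k * sin (vth i) * sin (vph i)))) (h i)) (cis (rho i))) (S i))).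
    by move=> t; rewrite upd_other.
  exact: isdC_const.
Qed.

Lemma rsum_ext n (f g : nat -> R) : (forall i, (i < n)%coq_nat -> f i = g i) -> rsum n f = rsum n g.
Proof. elim: n => [|n IH] H //=. rewrite IH; [rewrite H //; lia | move=> i Hi; apply H; lia]. Qed.

Lemma rsum_plus n (f g : nat -> R) : rsum n (fun i => f i + g i) = rsum n f + rsum n g.
Proof. elim: n => [|n IH] /=; [ring | rewrite IH; ring]. Qed.

Lemma rsum_plus4 n (f1 f2 f3 f4 : nat -> R) :
  rsum n (fun i => f1 i + f2 i + f3 i + f4 i) = rsum n f1 + rsum n f2 + rsum n f3 + rsum n f4.
Proof. elim: n => [|n IH] /=; [ring | rewrite IH; ring]. Qed.

Lemma rsum_scal n (f : nat -> R) c d : c * rsum n f * d = rsum n (fun i => c * f i * d).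
Proof. elim: n => [|n IH] /=; [ring | rewrite -IH; ring]. Qed.

Lemma rsum_mult_l n (f : nat -> R) c : c * rsum n f = rsum n (fun i => c * f i).
Proof. elim: n => [|n IH] /=; [ring | rewrite -IH; ring]. Qed.

Lemma rsum_zero n : rsum n (fun _ => 0) = 0.
Proof. elim: n => [|n IH] /=; [ring | rewrite IH; ring]. Qed.

Lemma rsum_add n m (f : nat -> R) : rsum (n + m) f = rsum n f + rsum m (fun i => f (n + i)%nat).
Proof.
elim: m => [|m IH] /=. rewrite addn0; ring.
rewrite addnS /= IH; ring.
Qed.

Lemma rsum_split3 N (f : nat -> R) :
  rsum (3 * N) f = rsum N f + rsum N (fun i => f (N + i)%nat) + rsum N (fun i => f (2 * N + i)%nat).
Proof.
have -> : (3 * N = N + (N + N))%nat by lia.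
rewrite rsum_add rsum_add.
have -> : (2 * N = N + N)%nat by lia.
rewrite Rplus_assoc; do 2 f_equal. apply: rsum_ext => i _. by rewrite addnA.
Qed.

Lemma rsum_swap n m (f : nat -> nat -> R) :
  rsum n (fun i => rsum m (fun j => f i j)) = rsum m (fun j => rsum n (fun i => f i j)).
Proof.
elim: n => [|n IH] /=. by rewrite rsum_zero.
rewrite IH -rsum_plus. done.
Qed.

Lemma T1 N al be a p : (p < N)%coq_nat -> Tmat N al be a p = al a p.
Proof. move=> H; rewrite /Tmat. have -> : Nat.ltb p N = true by apply/Nat.ltb_lt. done. Qed.
Lemma T2 N al be a p : (p < N)%coq_nat -> Tmat N al be a (N + p) = be a p.
Proof. move=> H; rewrite /Tmat.
have -> : Nat.ltb (N + p) N = false by apply/Nat.ltb_ge; lia.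
have -> : Nat.ltb (N + p) (2 * N) = true by apply/Nat.ltb_lt; lia.
f_equal; lia. Qed.
Lemma T3 N al be a p : Tmat N al be a (2 * N + p) = 0.
Proof. rewrite /Tmat.
have -> : Nat.ltb (2 * N + p) N = false by apply/Nat.ltb_ge; lia.
have -> : Nat.ltb (2 * N + p) (2 * N) = false by apply/Nat.ltb_ge; lia.
done. Qed.

Lemma stepA N al be a b (J : nat -> nat -> R) :
  rsum (3 * N) (fun p => rsum (3 * N) (fun p' => Tmat N al be a p * J p p' * Tmat N al be b p')) =
  rsum N (fun p => rsum N (fun p' =>
     al a p * J p p' * al b p' + be a p * J (N + p)%nat p' * al b p'
   + al a p * J p (N + p')%nat * be b p' + be a p * J (N + p)%nat (N + p')%nat * be b p')).
Proof.
have Z : forall P Q, (forall p', (p' < 3 * N)%coq_nat -> Q p' = 0) -> rsum P (fun _ => rsum (3 * N) Q) = 0.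
  move=> P Q HQ. rewrite (rsum_ext _ _ (fun _ => 0)) ?rsum_zero //.
  move=> i _. rewrite (rsum_ext _ _ (fun _ => 0)) ?rsum_zero //.
have Z2 : forall c P, rsum P (fun i => c * J (2 * N + i)%nat i * Tmat N al be b (2 * N + i)) = 0.
  move=> c P. rewrite (rsum_ext _ _ (fun _ => 0)) ?rsum_zero //. move=> i _. rewrite T3; ring.
rewrite rsum_split3.
rewrite (rsum_ext N (fun i => rsum (3 * N) (fun p' => Tmat N al be a (2 * N + i) * J (2 * N + i)%nat p' * Tmat N al be b p')) (fun _ => 0)); last first.
  move=> i _. rewrite (rsum_ext _ _ (fun _ => 0)) ?rsum_zero //. move=> j _. rewrite T3; ring.
rewrite rsum_zero Rplus_0_r.
rewrite (rsum_ext N (fun p => rsum (3 * N) (fun p' => Tmat N al be a p * J p p' * Tmat N al be b p'))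
   (fun p => rsum N (fun p' => al a p * J p p' * al b p') + rsum N (fun p' => al a p * J p (N + p')%nat * be b p'))); last first.
  move=> p Hp. rewrite rsum_split3.
  rewrite (rsum_ext N (fun i => Tmat N al be a p * J p (2 * N + i)%nat * Tmat N al be b (2 * N + i)) (fun _ => 0)); last by move=> i _; rewrite T3; ring.
  rewrite rsum_zero Rplus_0_r. f_equal; apply: rsum_ext => i Hi; by rewrite ?(T1 _ _ _ _ _ Hp) ?(T1 _ _ _ _ _ Hi) ?(T2 _ _ _ _ _ Hp) ?(T2 _ _ _ _ _ Hi).
rewrite (rsum_ext N (fun i => rsum (3 * N) (fun p' => Tmat N al be a (N + i) * J (N + i)%nat p' * Tmat N al be b p')) 
   (fun p => rsum N (fun p' => be a p * J (N + p)%nat p' * al b p') + rsum N (fun p' => be a p * J (N + p)%nat (N + p')%nat * be b p'))); last first.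
  move=> p Hp. rewrite rsum_split3.
  rewrite (rsum_ext N (fun i => Tmat N al be a (N + p) * J (N + p)%nat (2 * N + i)%nat * Tmat N al be b (2 * N + i)) (fun _ => 0)); last by move=> i _; rewrite T3; ring.
  rewrite rsum_zero Rplus_0_r. f_equal; apply: rsum_ext => i Hi; by rewrite ?(T1 _ _ _ _ _ Hp) ?(T1 _ _ _ _ _ Hi) ?(T2 _ _ _ _ _ Hp) ?(T2 _ _ _ _ _ Hi).
rewrite -rsum_plus. apply: rsum_ext => p _. rewrite -!rsum_plus. apply: rsum_ext => q _. ring.
Qed.

Lemma conj_cis a b u v : Cmult (Cconj (Cmult (cis a) u)) (Cmult (cis b) v) = Cmult (cis (b - a)) (Cmult (Cconj u) v).
Proof.
rewrite /cis cos_minus sin_minus. destruct u as [u1 u2], v as [v1 v2].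
rewrite /Cconj /Cmult /=. apply injective_projections; simpl; ring.
Qed.

Lemma Re4 z H1 H2 H3 H4 c1 c2 c3 c4 :
  Re (Cmult z (Cplus (Cplus (Cplus (Cmult (RtoC c1) H1) (Cmult (RtoC c2) H2)) (Cmult (RtoC c3) H3)) (Cmult (RtoC c4) H4)))
  = c1 * Re (Cmult z H1) + c2 * Re (Cmult z H2) + c3 * Re (Cmult z H3) + c4 * Re (Cmult z H4).
Proof.
destruct z, H1, H2, H3, H4. rewrite /Re /Cmult /Cplus /RtoC /=. ring.
Qed.





Lemma stepB Nr L sigma2 D (U V : nat -> nat -> C) P P' ra rb :
 (forall l m, (l < L)%coq_nat -> (m < Nr)%coq_nat -> D l P m = Cmult (cis ra) (U l m) /\ D l P' m = Cmult (cis rb) (V l m)) ->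
 J_eta Nr L sigma2 D P P' = rsum L (fun l => 2 / sigma2 * Re (Cmult (cis (rb - ra)) (hdot Nr (U l) (V l)))).
Proof.
move=> H. rewrite /J_eta. apply: rsum_ext => l Hl. f_equal. f_equal.
rewrite /hdot -csum_mult_l. apply: csum_ext => m Hm.
case: (H l m Hl Hm) => -> ->. exact: conj_cis.
Qed.

Lemma stepMain N Nr L sigma2 D al be (rho : nat -> R) (w w2 : nat -> nat -> nat -> C) a b :
  (forall l m p, (l < L)%coq_nat -> (m < Nr)%coq_nat -> (p < N)%coq_nat ->
     D l p m = Cmult (cis (rho p)) (w l p m) /\ D l (N + p)%nat m = Cmult (cis (rho p)) (w2 l p m)) ->
  J_q_entry N Nr L sigma2 D al be a b =
  rsum L (fun l => 2 / sigma2 * rsum N (fun m => rsum N (fun n =>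
    Re (Cmult (cis (rho n - rho m))
      (Cplus (Cplus (Cplus
        (Cmult (RtoC (al a m * al b n)) (hdot Nr (w l m) (w l n)))
        (Cmult (RtoC (be a m * al b n)) (hdot Nr (w2 l m) (w l n))))
        (Cmult (RtoC (al a m * be b n)) (hdot Nr (w l m) (w2 l n))))
        (Cmult (RtoC (be a m * be b n)) (hdot Nr (w2 l m) (w2 l n)))))))).
Proof.
move=> H.
rewrite /J_q_entry stepA.
match goal with |- _ = rsum L ?F =>
  rewrite (rsum_ext L F (fun l => rsum N (fun m => rsum N (fun n => 2 / sigma2 *
    Re (Cmult (cis (rho n - rho m))
      (Cplus (Cplus (Cplus
        (Cmult (RtoC (al a m * al b n)) (hdot Nr (w l m) (w l n)))
        (Cmult (RtoC (be a m * al b n)) (hdot Nr (w2 l m) (w l n))))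
        (Cmult (RtoC (al a m * be b n)) (hdot Nr (w l m) (w2 l n))))
        (Cmult (RtoC (be a m * be b n)) (hdot Nr (w2 l m) (w2 l n)))))))))
end.
2: by move=> l _; rewrite rsum_mult_l; apply: rsum_ext => m _; rewrite rsum_mult_l.
rewrite [X in _ = X]rsum_swap. apply: rsum_ext => p Hp. rewrite [X in _ = X]rsum_swap. apply: rsum_ext => q Hq.
have E1 := stepB Nr L sigma2 D (fun l => w l p) (fun l => w l q) p q (rho p) (rho q)
  (fun l m Hl Hm => conj (proj1 (H l m p Hl Hm Hp)) (proj1 (H l m q Hl Hm Hq))).
have E2 := stepB Nr L sigma2 D (fun l => w2 l p) (fun l => w l q) (N + p)%nat q (rho p) (rho q)
  (fun l m Hl Hm => conj (proj2 (H l m p Hl Hm Hp)) (proj1 (H l m q Hl Hm Hq))).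
have E3 := stepB Nr L sigma2 D (fun l => w l p) (fun l => w2 l q) p (N + q)%nat (rho p) (rho q)
  (fun l m Hl Hm => conj (proj1 (H l m p Hl Hm Hp)) (proj2 (H l m q Hl Hm Hq))).
have E4 := stepB Nr L sigma2 D (fun l => w2 l p) (fun l => w2 l q) (N + p)%nat (N + q)%nat (rho p) (rho q)
  (fun l m Hl Hm => conj (proj2 (H l m p Hl Hm Hp)) (proj2 (H l m q Hl Hm Hq))).
rewrite E1 E2 E3 E4 !rsum_scal -rsum_plus4. apply: rsum_ext => l _.
rewrite Re4. ring.
Qed.

Section TR.
Import GRing.Theory.
Lemma tr_inv2 (A : 'M[R]_2) : A \in unitmx ->
  (\tr (invmx A))%R = (A ord0 ord0 + A ord_max ord_max) / (A ord0 ord0 * A ord_max ord_max - A ord0 ord_max * A ord_max ord0).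
Proof.
move=> HA; rewrite /invmx HA mxtraceZ.
rewrite (expand_det_row _ ord0) /mxtrace !big_ord_recr !big_ord0 /= !mxE.
rewrite /cofactor !det_mx11 !mxE /=.
have E1 : widen_ord (m:=2) (leqnSn 1) ord_max = ord0 by apply/val_inj.
have E2 : lift ord0 (@ord0 0) = ord_max :> 'I_2 by apply/val_inj.
have E3 : lift ord_max (@ord0 0) = ord0 :> 'I_2 by apply/val_inj.
rewrite E1 E2 E3 !RealsE /= mulrC; congr (_ * _^-1)%R.
  by rewrite !add0r expr0 mul1r -signr_odd /= expr0 mul1r addrC.
by rewrite !add0r expr0 mul1r expr1 mulN1r mulrN.
Qed.
End TR.

Theorem mainTheorem1
  (N Nt Nr L : nat) (d lam : R) (th ph : nat -> R)
  (sx sy sz : nat -> R) (qx qy : R)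
  (h : nat -> C) (rho : nat -> R) (x : nat -> nat -> C) (sigma2 : R)
  (D : nat -> nat -> nat -> C) (al be : nat -> nat -> R) :
  0 < d -> 0 < lam -> 0 < sigma2 ->
  (forall i, (i < N)%nat -> 0 < sz i) ->
  (forall i, (i < N)%nat -> 0 <= rho i <= 2 * PI) ->
  (* al a i = d vartheta_i / d u^a and be a i = d varphi_i / d u^a at (qx,qy),
     with u^0 = q_x, u^1 = q_y *)
  (forall i, (i < N)%nat ->
     is_derive (fun t => vartheta_q (sx i) (sy i) (sz i) t qy) qx (al 0%nat i) /\
     is_derive (fun t => vartheta_q (sx i) (sy i) (sz i) qx t) qy (al 1%nat i) /\
     is_derive (fun t => varphi_q (sx i) (sy i) t qy) qx (be 0%nat i) /\
     is_derive (fun t => varphi_q (sx i) (sy i) qx t) qy (be 1%nat i)) ->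
  (* D holds the derivatives of mu(l) w.r.t. eta at the true parameters *)
  is_mu_derivative (kwave d lam) N Nt Nr L th ph rho x
    (fun i => vartheta_q (sx i) (sy i) (sz i) qx qy)
    (fun i => varphi_q (sx i) (sy i) qx qy) h D ->
  J_q N Nr L sigma2 D al be \in unitmx ->
  (forall a b : 'I_2,
     J_q N Nr L sigma2 D al be a b =
     rsum L (fun l => 2 / sigma2 *
       rsum N (fun m => rsum N (fun n =>
         Re (Cmult (cis (rho n - rho m))
               (kappa (kwave d lam) Nt Nr th ph
                  (fun i => vartheta_q (sx i) (sy i) (sz i) qx qy)
                  (fun i => varphi_q (sx i) (sy i) qx qy) h x al be
                  a b m n l)))))) /\
  (\tr (invmx (J_q N Nr L sigma2 D al be)))%R =
    (J_q N Nr L sigma2 D al be ord0 ord0 + J_q N Nr L sigma2 D al be ord_max ord_max)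
    / (J_q N Nr L sigma2 D al be ord0 ord0 * J_q N Nr L sigma2 D al be ord_max ord_max
       - J_q N Nr L sigma2 D al be ord0 ord_max * J_q N Nr L sigma2 D al be ord_max ord0).
Proof.
move=> Hd Hlam Hs Hsz Hrho Hder HD Hunit.
assert (Hrel : forall l m p, (l < L)%coq_nat -> (m < Nr)%coq_nat -> (p < N)%coq_nat ->
  D l p m = Cmult (cis (rho p)) (matvec Nt (dXi (kwave d lam) th ph
       (fun i => vartheta_q (sx i) (sy i) (sz i) qx qy)
       (fun i => varphi_q (sx i) (sy i) qx qy) h p) (x l) m) /\
  D l (N + p)%nat m = Cmult (cis (rho p)) (matvec Nt (ddXi (kwave d lam) th ph
       (fun i => vartheta_q (sx i) (sy i) (sz i) qx qy)
       (fun i => varphi_q (sx i) (sy i) qx qy) h p) (x l) m)).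
  move=> l m p Hl Hm Hp.
  have Hl' : (l < L)%nat by apply/ltP.
  have Hm' : (m < Nr)%nat by apply/ltP.
  have Hp' : (p < N)%nat by apply/ltP.
  have [H1 [H2 _]] := HD l m Hl' Hm'.
  split.
  - apply: (isdC_uniq _ _ _ _ (H1 p Hp')). by apply: mu_dvth.
  - apply: (isdC_uniq _ _ _ _ (H2 p Hp')). by apply: mu_dvph.
split.
- move=> a b. rewrite /J_q mxE.
  rewrite (stepMain N Nr L sigma2 D al be rho
    (fun l p => matvec Nt (dXi (kwave d lam) th ph
       (fun i => vartheta_q (sx i) (sy i) (sz i) qx qy)
       (fun i => varphi_q (sx i) (sy i) qx qy) h p) (x l))
    (fun l p => matvec Nt (ddXi (kwave d lam) th ph
       (fun i => vartheta_q (sx i) (sy i) (sz i) qx qy)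
       (fun i => varphi_q (sx i) (sy i) qx qy) h p) (x l)) a b Hrel).
  apply: rsum_ext => l _; f_equal; apply: rsum_ext => m _; apply: rsum_ext => n _.
- by apply: tr_inv2.
Qed.
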